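(* If a grid-labelled graph $G$ satisfies $D(G)=D(G^\Gamma)$, then the corresponding density matrix $\rho(G)$ has positive semidefinite partial transpose, whether $G$ is interpreted as an $L$-graph, a $Q$-graph, a weighted ($L$- or $Q$-) graph, or a hybrid graph.
   Context: Grid-labelled graph: vertices $(i,j)$ on a grid, vertex $(i,j)$ identified with $|ij\rangle\in\mathbb{C}^{m_1}\otimes\mathbb{C}^{m_2}$. An $L$-edge $\{(i,j),(k,l)\}$ has state $\frac1{\sqrt2}(|ij\rangle-|kl\rangle)$ and a $Q$-edge has state $\frac1{\sqrt2}(|ij\rangle+|kl\rangle)$; an $L$-graph has only $L$-edges, a $Q$-graph only $Q$-edges, a hybrid graph both kinds; edges may carry positive weights $w_e$. The density matrix is $\rho(G)=\frac{1}{\sum_e w_e}\sum_e w_e|e\rangle\langle e|$, i.e. the normalized Laplacian ($D-A$, $D+A$, or $L(S_l)+Q(S_q)$ for hybrid graphs with $S_l,S_q$ the $L$- and $Q$-subgraphs). $D(G)$ is the diagonal matrix of (weighted) vertex degrees. The partial transpose graph $G^\Gamma$ has the same vertices and contains edge $\{(i,l),(k,j)\}$ (same type and weight) iff $G$ contains edge $\{(i,j),(k,l)\}$. The partial transpose is taken with respect to either factor of $\mathbb{C}^{m_1}\otimes\mathbb{C}^{m_2}$. *)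

(* Defs.v *)
From HB Require Import structures.
From mathcomp Require Import all_boot all_order all_algebra.
Set Implicit Arguments. Unset Strict Implicit. Unset Printing Implicit Defensive.
Import Order.TTheory GRing.Theory Num.Theory.
Local Open Scope ring_scope.

(* Grid-labelled graphs on the vertex set 'I_m1 * 'I_m2; vertex (i,j) is
   identified with the basis vector |ij> of C^{m1} (x) C^{m2}, realised as the
   basis vector of index [mxvec_index i j] of C^{m1*m2}. *)
Section GridGraphs.
Variables (C : numClosedFieldType) (m1 m2 : nat).

Definition vtx := ('I_m1 * 'I_m2)%type.

Definition unvec (p : 'I_(m1 * m2)) : vtx :=
  enum_val (cast_ord (esym (@mxvec_cast m1 m2)) p).

Definition ket (x : vtx) : 'cV[C]_(m1 * m2) := delta_mx (mxvec_index x.1 x.2) 0.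

Definition proj (v : 'cV[C]_(m1 * m2)) : 'M[C]_(m1 * m2) :=
  v *m (map_mx Num.conj v)^T.

Definition Lstate (x y : vtx) : 'cV[C]_(m1 * m2) := (sqrtC 2)^-1 *: (ket x - ket y).
Definition Qstate (x y : vtx) : 'cV[C]_(m1 * m2) := (sqrtC 2)^-1 *: (ket x + ket y).

(* A (weighted, hybrid) grid-labelled graph is given by two weight functions
   wl, wq on pairs of vertices: wl x y > 0 iff {x,y} is an L-edge (of weight
   wl x y), wq x y > 0 iff {x,y} is a Q-edge.  *)
Definition is_grid_graph (wl wq : vtx -> vtx -> C) : Prop :=
  [/\ forall x y, 0 <= wl x y /\ 0 <= wq x y,
      forall x y, wl x y = wl y x /\ wq x y = wq y x,
      forall x, wl x x = 0 /\ wq x x = 0 &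
      forall x y, wl x y = 0 \/ wq x y = 0].

(* total edge weight \sum_e w_e: each unordered pair is counted twice in the
   double sum, hence the factor 1/2 *)
Definition total_weight (wl wq : vtx -> vtx -> C) : C :=
  2^-1 * \sum_(x : vtx) \sum_(y : vtx) (wl x y + wq x y).

(* rho(G) = (1/sum_e w_e) sum_e w_e |e><e|  (again each unordered edge appears
   twice in the double sum, hence 1/2) *)
Definition rho (wl wq : vtx -> vtx -> C) : 'M[C]_(m1 * m2) :=
  (total_weight wl wq)^-1 *:
   (2^-1 *: \sum_(x : vtx) \sum_(y : vtx)
        (wl x y *: proj (Lstate x y) + wq x y *: proj (Qstate x y))).

Definition degree (wl wq : vtx -> vtx -> C) (x : vtx) : C :=
  \sum_(y : vtx) (wl x y + wq x y).

Definition Dmat (wl wq : vtx -> vtx -> C) : 'M[C]_(m1 * m2) :=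
  \matrix_(p, q) (if p == q then degree wl wq (unvec p) else 0).

(* partial transpose graph: {(i,l),(k,j)} is an edge of G^Gamma (same type and
   weight) iff {(i,j),(k,l)} is an edge of G *)
Definition ptgraph (w : vtx -> vtx -> C) : vtx -> vtx -> C :=
  fun x y => w (x.1, y.2) (y.1, x.2).

Definition ptrans2 (A : 'M[C]_(m1 * m2)) : 'M[C]_(m1 * m2) :=
  \matrix_(p, q) A (mxvec_index (unvec p).1 (unvec q).2)
                   (mxvec_index (unvec q).1 (unvec p).2).
Definition ptrans1 (A : 'M[C]_(m1 * m2)) : 'M[C]_(m1 * m2) :=
  \matrix_(p, q) A (mxvec_index (unvec q).1 (unvec p).2)
                   (mxvec_index (unvec p).1 (unvec q).2).

End GridGraphs.

Definition psd (C : numClosedFieldType) (n : nat) (A : 'M[C]_n) : Prop :=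
  A = (map_mx Num.conj A)^T /\
  forall v : 'cV[C]_n, 0 <= ((map_mx Num.conj v)^T *m A *m v) 0 0.

(* Main.v *)
Require Import Defs.
From HB Require Import structures.
From mathcomp Require Import all_boot all_order all_algebra.
From mathcomp Require Import ring.
Import Order.TTheory GRing.Theory Num.Theory.
Local Open Scope ring_scope.
Set Implicit Arguments. Unset Strict Implicit.

Section S.
Variables (C : numClosedFieldType) (m1 m2 : nat).
Local Notation vtx := (vtx m1 m2).
Local Notation unvec := (@unvec m1 m2).
Definition idx (x : vtx) : 'I_(m1 * m2)%N := mxvec_index x.1 x.2.

Lemma unvec_idx x : unvec (idx x) = x.
Proof. by case: x => i j; rewrite /unvec /idx /mxvec_index cast_ordK enum_rankK. Qed.

Lemma unvec_idx' i j : unvec (mxvec_index i j) = (i, j).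
Proof. exact: (unvec_idx (i, j)). Qed.

Lemma idx_unvec p : idx (unvec p) = p.
Proof. by rewrite /unvec /idx /mxvec_index -surjective_pairing enum_valK cast_ordKV. Qed.

Lemma eq_idx p x : (p == idx x) = (unvec p == x).
Proof. by rewrite -{1}(idx_unvec p) (can_eq unvec_idx). Qed.

Lemma eq_idx' p x : (p == mxvec_index x.1 x.2) = (unvec p == x).
Proof. exact: eq_idx. Qed.

Lemma psd0 n : psd (0 : 'M[C]_n).
Proof. split; first by rewrite map_mx0 trmx0. by move=> v; rewrite mulmx0 mul0mx mxE. Qed.

Lemma psdD n (A B : 'M[C]_n) : psd A -> psd B -> psd (A + B).
Proof.
case=> hA qA [hB qB]; split; first by rewrite map_mxD linearD /= -hA -hB.
by move=> v; rewrite mulmxDr mulmxDl mxE addr_ge0.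
Qed.

Lemma psdZ n (k : C) (A : 'M[C]_n) : 0 <= k -> psd A -> psd (k *: A).
Proof.
move=> k0 [hA qA]; split.
  apply/matrixP=> i j; rewrite !mxE rmorphM /= geC0_conj //; congr (_ * _).
  by rewrite {1}hA !mxE.
by move=> v; rewrite -scalemxAr -scalemxAl mxE mulr_ge0.
Qed.

Lemma psd_sum n I (r : seq I) (F : I -> 'M[C]_n) :
  (forall i, psd (F i)) -> psd (\sum_(i <- r) F i).
Proof. by move=> H; apply: (big_ind (@psd C n)) => //; [apply: psd0|apply: psdD]. Qed.

Lemma psd_proj (v : 'cV[C]_(m1 * m2)%N) : psd (proj v).
Proof.
split.
  rewrite /proj map_mxM trmx_mul !map_trmx trmxK; congr (_ *m _).
  by rewrite -map_mx_comp map_mx_id // => x /=; rewrite conjCK.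
move=> u; rewrite /proj mulmxA -mulmxA.
set a := ((map_mx Num.conj u)^T *m v).
have -> : (map_mx Num.conj v)^T *m u = map_mx Num.conj a^T.
  rewrite /a trmx_mul map_mxM trmxK map_trmx; congr (_ *m _).
  by rewrite -map_mx_comp map_mx_id // => x /=; rewrite conjCK.
by rewrite mxE big_ord1 !mxE mul_conjC_ge0.
Qed.

Local Notation d p x := ((unvec p == x)%:R : C).

Lemma ket_entry x p : ket C x p 0 = d p x.
Proof. by rewrite /ket mxE eqxx andbT -/(idx x) eq_idx. Qed.

Lemma ss : (sqrtC (2:C))^-1 * (sqrtC 2)^-1 = 2^-1.
Proof. by rewrite -invfM -expr2 sqrtCK. Qed.

Lemma s_conj : Num.conj ((sqrtC (2:C))^-1) = (sqrtC 2)^-1.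
Proof. by rewrite geC0_conj // invr_ge0 sqrtC_ge0 ler0n. Qed.

Lemma proj_L x y p q : proj (Lstate C x y) p q = 2^-1 * ((d p x - d p y) * (d q x - d q y)).
Proof.
rewrite /proj mxE big_ord1 !mxE /= !eqxx !andbT !eq_idx' rmorphM rmorphB /= !rmorph_nat s_conj -ss.
ring.
Qed.

Lemma proj_Q x y p q : proj (Qstate C x y) p q = 2^-1 * ((d p x + d p y) * (d q x + d q y)).
Proof.
rewrite /proj mxE big_ord1 !mxE /= !eqxx !andbT !eq_idx' rmorphM rmorphD /= !rmorph_nat s_conj -ss.
ring.
Qed.

Lemma sum_delta (f : vtx -> C) a : \sum_x (a == x)%:R * f x = f a.
Proof.
rewrite (bigD1 a) //= eqxx mul1r big1 ?addr0 // => x /negbTE.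
by rewrite eq_sym => ->; rewrite mul0r.
Qed.

Lemma dsplit (f g : vtx -> vtx -> C) :
  \sum_x \sum_y (f x y + g x y) = \sum_x \sum_y f x y + \sum_x \sum_y g x y.
Proof. by rewrite -big_split; apply: eq_bigr => x _; rewrite big_split. Qed.

Lemma dscale (c : C) (f : vtx -> vtx -> C) :
  \sum_x \sum_y c * f x y = c * \sum_x \sum_y f x y.
Proof. by rewrite mulr_sumr; apply: eq_bigr => x _; rewrite mulr_sumr. Qed.

Lemma S1 (w : vtx -> vtx -> C) p q :
  \sum_x \sum_y w x y * (d p x * d q x) = d q (unvec p) * \sum_y w (unvec p) y.
Proof.
rewrite (eq_bigr (fun x => d p x * (d q x * \sum_y w x y))); first by rewrite sum_delta.
by move=> x _; rewrite !mulr_sumr; apply: eq_bigr => y _; ring.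
Qed.

Lemma S2 (w : vtx -> vtx -> C) p q :
  \sum_x \sum_y w x y * (d p y * d q y) = d q (unvec p) * \sum_x w x (unvec p).
Proof.
rewrite exchange_big /=.
rewrite (eq_bigr (fun y => d p y * (d q y * \sum_x w x y))); first by rewrite sum_delta.
by move=> y _; rewrite !mulr_sumr; apply: eq_bigr => x _; ring.
Qed.

Lemma S3 (w : vtx -> vtx -> C) p q :
  \sum_x \sum_y w x y * (d p x * d q y) = w (unvec p) (unvec q).
Proof.
rewrite (eq_bigr (fun x => d p x * \sum_y d q y * w x y)).
  by rewrite sum_delta sum_delta.
by move=> x _; rewrite !mulr_sumr; apply: eq_bigr => y _; ring.
Qed.

Lemma S4 (w : vtx -> vtx -> C) p q :
  \sum_x \sum_y w x y * (d p y * d q x) = w (unvec q) (unvec p).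
Proof.
rewrite exchange_big /=.
rewrite (eq_bigr (fun y => d p y * \sum_x d q x * w x y)).
  by rewrite sum_delta sum_delta.
by move=> y _; rewrite !mulr_sumr; apply: eq_bigr => x _; ring.
Qed.

Lemma entryD n (A B : 'M[C]_n) i j : (A + B) i j = A i j + B i j.
Proof. by rewrite mxE. Qed.
Lemma entryZ n k (A : 'M[C]_n) i j : (k *: A) i j = k * A i j.
Proof. by rewrite mxE. Qed.

Lemma rho_entry (wl wq : vtx -> vtx -> C) p q :
  (forall x y, wl x y = wl y x /\ wq x y = wq y x) ->
  rho wl wq p q = (total_weight wl wq)^-1 * 2^-1 *
    (d q (unvec p) * degree wl wq (unvec p)
     + (wq (unvec p) (unvec q) - wl (unvec p) (unvec q))).
Proof.
move=> Hs.
rewrite /rho !entryZ summxE.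
under eq_bigr do rewrite summxE.
under eq_bigr do under eq_bigr do rewrite entryD !entryZ proj_L proj_Q.
pose u x y := wl x y + wq x y.
pose v x y := wq x y - wl x y.
rewrite (eq_bigr (fun x => \sum_y ((2^-1 * (u x y * (d p x * d q x)) + 2^-1 * (u x y * (d p y * d q y)))
   + (2^-1 * (v x y * (d p x * d q y)) + 2^-1 * (v x y * (d p y * d q x)))))); last first.
  by move=> x _; apply: eq_bigr => y _; rewrite /u /v; ring.
rewrite !dsplit !dscale.
rewrite S1 S2 S3 S4.
have -> : \sum_x u x (unvec p) = degree wl wq (unvec p).
  by apply: eq_bigr => x _; rewrite /u (Hs x _).1 (Hs x _).2.
have -> : v (unvec q) (unvec p) = v (unvec p) (unvec q) by rewrite /v (Hs (unvec q) _).1 (Hs (unvec q) _).2.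
rewrite /v -/(degree wl wq (unvec p)).
set W := (total_weight wl wq)^-1.
have h2 : (2:C) != 0 by rewrite pnatr_eq0.
by field.
Qed.

Lemma rho_sym (wl wq : vtx -> vtx -> C) a b :
  (forall x y, wl x y = wl y x /\ wq x y = wq y x) ->
  rho wl wq a b = rho wl wq b a.
Proof.
move=> Hs; rewrite !rho_entry //.
case: (eqVneq (unvec a) (unvec b)) => [E|E].
  by rewrite E.
by rewrite (Hs (unvec a) _).1 (Hs (unvec a) _).2 !mul0r.
Qed.

Lemma psd_rho (wl wq : vtx -> vtx -> C) :
  (forall x y, 0 <= wl x y /\ 0 <= wq x y) -> psd (rho wl wq).
Proof.
move=> Hn; rewrite /rho; apply: psdZ.
  rewrite invr_ge0 /total_weight mulr_ge0 ?invr_ge0 ?ler0n //.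
  by apply: sumr_ge0 => x _; apply: sumr_ge0 => y _; rewrite addr_ge0 ?(Hn x y).1 ?(Hn x y).2.
apply: psdZ; first by rewrite invr_ge0 ler0n.
apply: psd_sum => x; apply: psd_sum => y; apply: psdD; apply: psdZ;
  by [apply: (Hn x y).1 | apply: (Hn x y).2 | apply: psd_proj].
Qed.
End S.

Theorem mainTheorem9 (C : numClosedFieldType) (m1 m2 : nat)
    (wl wq : vtx m1 m2 -> vtx m1 m2 -> C) :
  is_grid_graph wl wq ->
  Dmat wl wq = Dmat (ptgraph wl) (ptgraph wq) ->
  psd (ptrans1 (rho wl wq)) /\ psd (ptrans2 (rho wl wq)).
Proof.
case=> Hn Hs Hd Hex HD.
have deg_eq x : degree wl wq x = degree (ptgraph wl) (ptgraph wq) x.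
  have := congr1 (fun M : 'M[C]_(m1 * m2) => M (idx x) (idx x)) HD.
  by rewrite /= !mxE eqxx unvec_idx.
have Hs' : forall x y, ptgraph wl x y = ptgraph wl y x /\ ptgraph wq x y = ptgraph wq y x.
  by move=> x y; rewrite /ptgraph (Hs (x.1, y.2) _).1 (Hs (x.1, y.2) _).2.
have Hn' : forall x y, 0 <= ptgraph wl x y /\ 0 <= ptgraph wq x y.
  by move=> x y; apply: Hn.
have W_eq : total_weight wl wq = total_weight (ptgraph wl) (ptgraph wq).
  by rewrite /total_weight; congr (_ * _); apply: eq_bigr => x _; exact: deg_eq x.
have key : ptrans2 (rho wl wq) = rho (ptgraph wl) (ptgraph wq).
  apply/matrixP => p q; rewrite mxE !rho_entry // !unvec_idx' -W_eq.
  congr (_ * (_ + _)).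
  rewrite -deg_eq.
  case: (unvec p) => i j; case: (unvec q) => k l /=.
  rewrite !xpair_eqE.
  case: (eqVneq j l) => [->|ne] //.
  by rewrite !andbF !mul0r.
have key1 : ptrans1 (rho wl wq) = ptrans2 (rho wl wq).
  by apply/matrixP => p q; rewrite [LHS]mxE [RHS]mxE; apply: rho_sym.
by rewrite key1 key; split; apply: psd_rho.
Qed.
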